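(* Let $(A,\mathcal H)$ be a commutative Hopf algebroid and $I\subseteq\mathcal H$ a Hopf ideal. Then $I$ is normal if and only if $\langle s-t\rangle\subseteq I$ and $\mathcal H/I\cong\overline{\mathcal H}/\bar I$ is a quotient right $\mathcal H$-comodule of $\overline{\mathcal H}$ with respect to the coaction $\delta:\overline{\mathcal H}\to\overline{\mathcal H}\otimes_A\mathcal H$, $\bar h\mapsto\sum\overline{h_2}\otimes_A\mathcal S(h_1)h_3$, i.e. there is a map $\tilde\delta:\overline{\mathcal H}/\bar I\to(\overline{\mathcal H}/\bar I)\otimes_A\mathcal H$ with $\tilde\delta\circ p=(p\otimes_A\mathcal H)\circ\delta$, where $p:\overline{\mathcal H}\to\overline{\mathcal H}/\bar I$ is the projection.
   Context: A commutative Hopf algebroid $(A,\mathcal H)$ over a field $\Bbbk$: commutative $\Bbbk$-algebras $A,\mathcal H$ with algebra maps $s,t:A\to\mathcal H$, $\varepsilon:\mathcal H\to A$, $\Delta:\mathcal H\to\mathcal H\otimes_A\mathcal H$ (left factor an $A$-module via $t$, right via $s$), $\mathcal S:\mathcal H\to\mathcal H$ such that $(\mathcal H,\Delta,\varepsilon)$ is a coassociative counital $A$-coring, $\mathcal Ss=t$, $\mathcal St=s$, $\mathcal S^2=\mathrm{id}$, $\sum\mathcal S(u_1)u_2=t\varepsilon(u)$, $\sum u_1\mathcal S(u_2)=s\varepsilon(u)$ ($\Delta(u)=\sum u_1\otimes_Au_2$). A Hopf ideal: ideal $I$ with $\varepsilon(I)=0$, $\Delta(I)\subseteq$ image of $\mathcal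 H\otimes_AI+I\otimes_A\mathcal H$, $\mathcal S(I)\subseteq I$. $\langle s-t\rangle$ is the ideal generated by all $s(a)-t(a)$; $\overline{\mathcal H}=\mathcal H/\langle s-t\rangle$ with classes $\bar x$, an $A$-algebra via $\eta(a)=\overline{s(a)}=\overline{t(a)}$; $\bar I=I/\langle s-t\rangle$. The map $\delta$ above is a well-defined right $\mathcal H$-coaction making $\overline{\mathcal H}$ a right $\mathcal H$-comodule algebra; tensor products $-\otimes_A\mathcal H$ use the $A$-module structure via $\eta$ on the left factor and via $s$ on $\mathcal H$. $I$ is normal if $\langle s-t\rangle\subseteq I$ and for every $x\in I$, $\sum\overline{x_2}\otimes_A\mathcal S(x_1)x_3$ lies in the image of $\bar I\otimes_A\mathcal H$ in $\overline{\mathcal H}\otimes_A\mathcal H$. *)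

(* Defs.v *)
From HB Require Import structures.
From mathcomp Require Import all_boot all_order all_algebra.

Set Implicit Arguments.
Unset Strict Implicit.
Unset Printing Implicit Defensive.

Import GRing.Theory.
Local Open Scope ring_scope.

(* Tensor products over a commutative ring A, by generators and relations.  *)
(* An element of M ⊗_A N is represented by a finite formal sum             *)
(* Σ m_i ⊗ n_i, i.e. a list of pairs; [tens_eq] is the congruence on such   *)
(* lists generated by the defining relations of the tensor product.         *)
(* M and N may themselves be given as quotients ("setoids"): eqM / eqN is   *)
(* the equality of the quotient module on representatives (it must be a    *)
(* congruence; the generator [te_congl]/[te_congr] identifies equal classes).*)
(* actM a m is the A-action on the (right) module M, actN a n the action on *)
(* the (left) module N, so that the balancing relation is                   *)
(*   (actM a m) ⊗ n = m ⊗ (actN a n).                                        *)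
Section Tensor.
Variables (A : comPzRingType) (M N : zmodType).
Variables (eqM : M -> M -> Prop) (eqN : N -> N -> Prop).
Variables (actM : A -> M -> M) (actN : A -> N -> N).

Inductive tens_eq : seq (M * N) -> seq (M * N) -> Prop :=
| te_refl s : tens_eq s s
| te_sym s1 s2 : tens_eq s1 s2 -> tens_eq s2 s1
| te_trans s1 s2 s3 : tens_eq s1 s2 -> tens_eq s2 s3 -> tens_eq s1 s3
| te_cat s1 s2 t1 t2 :
    tens_eq s1 s2 -> tens_eq t1 t2 -> tens_eq (s1 ++ t1) (s2 ++ t2)
| te_comm s t : tens_eq (s ++ t) (t ++ s)
| te_addl m1 m2 n : tens_eq [:: (m1 + m2, n)] [:: (m1, n); (m2, n)]
| te_addr m n1 n2 : tens_eq [:: (m, n1 + n2)] [:: (m, n1); (m, n2)]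
| te_zerol n : tens_eq [:: (0, n)] [::]
| te_zeror m : tens_eq [:: (m, 0)] [::]
| te_bal a m n : tens_eq [:: (actM a m, n)] [:: (m, actN a n)]
| te_congl m m' n : eqM m m' -> tens_eq [:: (m, n)] [:: (m', n)]
| te_congr m n n' : eqN n n' -> tens_eq [:: (m, n)] [:: (m, n')].

End Tensor.

Section Tensor3.
Variables (A : comPzRingType) (M N P : zmodType).
Variables (actMr : A -> M -> M) (actNl actNr : A -> N -> N) (actPl : A -> P -> P).

Inductive tens3_eq : seq (M * N * P) -> seq (M * N * P) -> Prop :=
| t3_refl s : tens3_eq s s
| t3_sym s1 s2 : tens3_eq s1 s2 -> tens3_eq s2 s1
| t3_trans s1 s2 s3 : tens3_eq s1 s2 -> tens3_eq s2 s3 -> tens3_eq s1 s3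
| t3_cat s1 s2 t1 t2 :
    tens3_eq s1 s2 -> tens3_eq t1 t2 -> tens3_eq (s1 ++ t1) (s2 ++ t2)
| t3_comm s t : tens3_eq (s ++ t) (t ++ s)
| t3_add1 m1 m2 n p : tens3_eq [:: (m1 + m2, n, p)] [:: (m1, n, p); (m2, n, p)]
| t3_add2 m n1 n2 p : tens3_eq [:: (m, n1 + n2, p)] [:: (m, n1, p); (m, n2, p)]
| t3_add3 m n p1 p2 : tens3_eq [:: (m, n, p1 + p2)] [:: (m, n, p1); (m, n, p2)]
| t3_zero1 n p : tens3_eq [:: (0, n, p)] [::]
| t3_zero2 m p : tens3_eq [:: (m, 0, p)] [::]
| t3_zero3 m n : tens3_eq [:: (m, n, 0)] [::]
| t3_bal12 a m n p : tens3_eq [:: (actMr a m, n, p)] [:: (m, actNl a n, p)]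
| t3_bal23 a m n p : tens3_eq [:: (m, actNr a n, p)] [:: (m, n, actPl a p)].

End Tensor3.

Section HopfAlgebroid.
Variables (k : fieldType) (A H : comAlgType k).
Variables (s t : {lrmorphism A -> H}).

(* H ⊗_A H : left factor an A-module via t, right factor via s. *)
Definition HH_eq : seq (H * H) -> seq (H * H) -> Prop :=
  tens_eq (@eq H) (@eq H) (fun a h => h * t a) (fun a h => s a * h).

Definition HHH_eq : seq (H * H * H) -> seq (H * H * H) -> Prop :=
  tens3_eq (fun a h => h * t a) (fun a h => s a * h) (fun a h => h * t a)
           (fun a h => s a * h).

Definition st_ideal (x : H) : Prop :=
  exists r : seq (H * A), x = \sum_(p <- r) p.1 * (s p.2 - t p.2).

Definition is_ideal (I : H -> Prop) : Prop :=
  [/\ I 0, (forall x y, I x -> I y -> I (x + y)) & (forall a x, I x -> I (a * x))].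

(* Delta u is a representative (a finite formal sum) of Δ(u) ∈ H ⊗_A H.      *)
Record hopf_algebroid (eps : {lrmorphism H -> A}) (Delta : H -> seq (H * H))
    (S : {lrmorphism H -> H}) : Prop := HopfAlgebroid {
  ha_Delta_add : forall u v, HH_eq (Delta (u + v)) (Delta u ++ Delta v);
  ha_Delta_scale : forall (c : k) u,
    HH_eq (Delta (c *: u)) [seq (c *: p.1, p.2) | p <- Delta u];
  ha_Delta_mul : forall u v,
    HH_eq (Delta (u * v)) [seq (p.1 * q.1, p.2 * q.2) | p <- Delta u, q <- Delta v];
  ha_Delta_one : HH_eq (Delta 1) [:: (1, 1)];
  ha_Delta_sl : forall a u,
    HH_eq (Delta (s a * u)) [seq (s a * p.1, p.2) | p <- Delta u];
  ha_Delta_tr : forall a u,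
    HH_eq (Delta (t a * u)) [seq (p.1, p.2 * t a) | p <- Delta u];
  ha_eps_sl : forall a u, eps (s a * u) = a * eps u;
  ha_eps_tr : forall a u, eps (t a * u) = eps u * a;
  ha_coassoc : forall u,
    HHH_eq [seq (q.1, q.2, p.2) | p <- Delta u, q <- Delta p.1]
           [seq (p.1, q.1, q.2) | p <- Delta u, q <- Delta p.2];
  ha_counit_l : forall u, \sum_(p <- Delta u) s (eps p.1) * p.2 = u;
  ha_counit_r : forall u, \sum_(p <- Delta u) p.1 * t (eps p.2) = u;
  ha_S_s : forall a, S (s a) = t a;
  ha_S_t : forall a, S (t a) = s a;
  ha_S_invol : forall u, S (S u) = u;
  ha_S_l : forall u, \sum_(p <- Delta u) S p.1 * p.2 = t (eps u);
  ha_S_r : forall u, \sum_(p <- Delta u) p.1 * S p.2 = s (eps u)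
}.

Definition hopf_ideal (eps : {lrmorphism H -> A}) (Delta : H -> seq (H * H))
    (S : {lrmorphism H -> H}) (I : H -> Prop) : Prop :=
  [/\ is_ideal I,
      (forall x, I x -> eps x = 0),
      (forall x, I x -> exists r : seq (H * H),
          (forall p, p \in r -> I p.2 \/ I p.1) /\ HH_eq (Delta x) r)
    & (forall x, I x -> I (S x))].

(* Hbar = H / <s - t>, represented by elements of H; Hbar ⊗_A H, where Hbar *)
(* is an A-module via eta(a) = class of s(a), and H via s.                   *)
Definition barH_eq (x y : H) : Prop := st_ideal (x - y).

Definition HbarH_eq : seq (H * H) -> seq (H * H) -> Prop :=
  tens_eq barH_eq (@eq H) (fun a h => s a * h) (fun a h => s a * h).

Definition barI (I : H -> Prop) (x : H) : Prop :=
  exists i, I i /\ barH_eq x i.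

(* Hbar / Ibar, represented by elements of H:  x̄ ≡ ȳ mod Ī. *)
Definition quotI_eq (I : H -> Prop) (x y : H) : Prop := barI I (x - y).

Definition QH_eq (I : H -> Prop) : seq (H * H) -> seq (H * H) -> Prop :=
  tens_eq (quotI_eq I) (@eq H) (fun a h => s a * h) (fun a h => s a * h).

(* The coaction delta(h̄) = Σ h̄_2 ⊗ S(h_1) h_3, on a representative h,        *)
(* computed from the representative Σ h_1 ⊗ h_2 ⊗ h_3 of (Δ ⊗ id)Δ(h).        *)
Definition coact (Delta : H -> seq (H * H)) (S : {lrmorphism H -> H}) (h : H)
  : seq (H * H) :=
  [seq (q.2, S q.1 * p.2) | p <- Delta h, q <- Delta p.1].

Definition normal_ideal (Delta : H -> seq (H * H)) (S : {lrmorphism H -> H})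
    (I : H -> Prop) : Prop :=
  (forall x, st_ideal x -> I x) /\
  (forall x, I x -> exists r : seq (H * H),
      (forall p, p \in r -> I p.1) /\ HbarH_eq (coact Delta S x) r).

End HopfAlgebroid.

(* Main.v *)
Require Import Defs.
From HB Require Import structures.
From mathcomp Require Import all_boot all_order all_algebra.
Local Open Scope ring_scope.
Set Implicit Arguments.
Unset Strict Implicit.
Import GRing.Theory.
Lemma tens_perm (A : comPzRingType) (M N : zmodType) (eqM : M -> M -> Prop)
  (eqN : N -> N -> Prop) (actM : A -> M -> M) (actN : A -> N -> N) s1 s2 :
  perm_eq s1 s2 -> tens_eq eqM eqN actM actN s1 s2.
Proof.
elim: s1 s2 => [|x s1 IH] s2 hp.
  have -> : s2 = [::] by apply/nilP; rewrite /nilp -(perm_size hp).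
  exact: te_refl.
have xs2 : x \in s2 by rewrite -(perm_mem hp) mem_head.
case/splitPr: xs2 hp => t1 t2 hp.
have hp' : perm_eq s1 (t1 ++ t2).
  rewrite -(perm_cons x); apply: perm_trans hp _.
  by rewrite perm_catC /= perm_cons perm_catC.
apply: te_trans (te_cat (te_refl _ _ _ _ [:: x]) (IH _ hp')) _.
rewrite /= -[x :: t1 ++ t2]/(([:: x] ++ t1) ++ t2) -[t1 ++ x :: t2]/(t1 ++ [:: x] ++ t2).
rewrite catA; apply: te_cat; [exact: te_comm| exact: te_refl].
Qed.

Lemma tens_mono (A : comPzRingType) (M N : zmodType) (eqM eqM' : M -> M -> Prop)
  (eqN : N -> N -> Prop) (actM : A -> M -> M) (actN : A -> N -> N) s1 s2 :
  (forall m m', eqM m m' -> eqM' m m') ->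
  tens_eq eqM eqN actM actN s1 s2 -> tens_eq eqM' eqN actM actN s1 s2.
Proof.
move=> hM; elim=> *; by [constructor; auto | econstructor; eauto].
Qed.

Lemma tens_map1 (A : comPzRingType) (M N : zmodType) (eqM : M -> M -> Prop)
  (eqN : N -> N -> Prop) (actM : A -> M -> M) (actN : A -> N -> N) (X : Type)
  (h1 h2 : X -> M * N) (l : seq X) :
  (forall x, tens_eq eqM eqN actM actN [:: h1 x] [:: h2 x]) ->
  tens_eq eqM eqN actM actN (map h1 l) (map h2 l).
Proof.
move=> h; elim: l => [|x l IH] /=; first exact: te_refl.
exact: (te_cat (h x) IH).
Qed.

Lemma tens_flat (A : comPzRingType) (M N : zmodType) (eqM : M -> M -> Prop)
  (eqN : N -> N -> Prop) (actM : A -> M -> M) (actN : A -> N -> N) (X : Type)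
  (h1 h2 : X -> seq (M * N)) (l : seq X) :
  (forall x, tens_eq eqM eqN actM actN (h1 x) (h2 x)) ->
  tens_eq eqM eqN actM actN (flatten (map h1 l)) (flatten (map h2 l)).
Proof.
move=> h; elim: l => [|x l IH] /=; first exact: te_refl.
exact: (te_cat (h x) IH).
Qed.

Lemma tens_zerosl (A : comPzRingType) (M N : zmodType) (eqM : M -> M -> Prop)
  (eqN : N -> N -> Prop) (actM : A -> M -> M) (actN : A -> N -> N) (X : Type)
  (f : X -> N) (l : seq X) :
  tens_eq eqM eqN actM actN [seq (0, f n) | n <- l] [::].
Proof.
elim: l => [|x l IH] /=; first exact: te_refl.
exact: (te_cat (te_zerol _ _ _ _ (f x)) IH).
Qed.

Lemma tens_neg (A : comPzRingType) (M N : zmodType) (eqM : M -> M -> Prop)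
  (eqN : N -> N -> Prop) (actM : A -> M -> M) (actN : A -> N -> N) (l : seq (M * N)) :
  tens_eq eqM eqN actM actN (l ++ [seq (- p.1, p.2) | p <- l]) [::].
Proof.
elim: l => [|[a b] l IH] /=; first exact: te_refl.
apply: te_trans (tens_perm _ _ _ _ (_ : perm_eq _ ([:: (a, b); (- a, b)] ++ (l ++ _)))) _.
  by rewrite /= perm_cons perm_catC /= perm_cons perm_catC.
have h1 : tens_eq eqM eqN actM actN [:: (a, b); (- a, b)] [::].
  apply: te_trans (te_sym (te_addl _ _ _ _ _ _ _)) _.
  by rewrite subrr; apply: te_zerol.
exact: (te_cat h1 IH).
Qed.
Definition Gm (k : fieldType) (H : comAlgType k) (S : {lrmorphism H -> H}) (n : H)
  (l : seq (H * H)) := [seq (q.2, S q.1 * n) | q <- l].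

Lemma G_resp (k : fieldType) (A H : comAlgType k) (s t : {lrmorphism A -> H})
  (S : {lrmorphism H -> H}) n l1 l2 :
  (forall a, S (t a) = s a) -> HH_eq s t l1 l2 ->
  HbarH_eq s t (Gm S n l1) (Gm S n l2).
Proof.
move=> hSt; elim=> /=.
- move=> *; exact: te_refl.
- move=> *; exact: te_sym.
- move=> *; apply: te_trans; eauto.
- by move=> *; rewrite /Gm !map_cat; apply: te_cat.
- by move=> *; rewrite /Gm !map_cat; apply: te_comm.
- by move=> m1 m2 n'; rewrite rmorphD mulrDl; apply: te_addr.
- by move=> m n1 n2; apply: te_addl.
- by move=> n'; rewrite rmorph0 mul0r; apply: te_zeror.
- by move=> m; apply: te_zerol.
- move=> a m n' /=; rewrite rmorphM.
  have -> : S m * S (t a) * n = s a * (S m * n).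
    by rewrite (_ : S (t a) = s a) ?[S m * s a]mulrC -?mulrA //; exact: hSt.
  apply: te_sym; apply: te_trans (te_bal _ _ _ _ _ _ _) _.
  exact: te_refl.
- by move=> m m' n' ->; apply: te_refl.
- by move=> m n1 n2 ->; apply: te_refl.
Qed.

Lemma tens_zerosr (A : comPzRingType) (M N : zmodType) (eqM : M -> M -> Prop)
  (eqN : N -> N -> Prop) (actM : A -> M -> M) (actN : A -> N -> N) (X : Type)
  (f : X -> M) (l : seq X) :
  tens_eq eqM eqN actM actN [seq (f n, 0) | n <- l] [::].
Proof.
elim: l => [|x l IH] /=; first exact: te_refl.
exact: (te_cat (te_zeror _ _ _ _ (f x)) IH).
Qed.

Lemma G_addn (k : fieldType) (A H : comAlgType k) (s t : {lrmorphism A -> H})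
  (S : {lrmorphism H -> H}) n1 n2 l :
  HbarH_eq s t (Gm S (n1 + n2) l) (Gm S n1 l ++ Gm S n2 l).
Proof.
elim: l => [|[a b] l IH] /=; first exact: te_refl.
rewrite mulrDr -cat1s.
apply: te_trans (te_cat (te_addr _ _ _ _ b (S a * n1) (S a * n2)) IH) _.
apply: tens_perm; rewrite /= perm_cons.
by rewrite -cat1s perm_catCA.
Qed.

Lemma G_0 (k : fieldType) (A H : comAlgType k) (s t : {lrmorphism A -> H})
  (S : {lrmorphism H -> H}) l :
  HbarH_eq s t (Gm S 0 l) [::].
Proof.
rewrite /Gm; under eq_map do rewrite mulr0.
exact: tens_zerosr.
Qed.

Definition Fm (k : fieldType) (H : comAlgType k) (Delta : H -> seq (H * H))
  (S : {lrmorphism H -> H}) (l : seq (H * H)) :=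
  flatten [seq Gm S p.2 (Delta p.1) | p <- l].

Lemma Fm_cat (k : fieldType) (H : comAlgType k) (Delta : H -> seq (H * H))
  (S : {lrmorphism H -> H}) l1 l2 :
  Fm Delta S (l1 ++ l2) = Fm Delta S l1 ++ Fm Delta S l2.
Proof. by rewrite /Fm map_cat flatten_cat. Qed.

Lemma coactE (k : fieldType) (A H : comAlgType k) (Delta : H -> seq (H * H))
  (S : {lrmorphism H -> H}) h : coact Delta S h = Fm Delta S (Delta h).
Proof. by []. Qed.

Lemma Delta0 (k : fieldType) (A H : comAlgType k) (s t : {lrmorphism A -> H})
  (eps : {lrmorphism H -> A}) (Delta : H -> seq (H * H)) (S : {lrmorphism H -> H}) :
  hopf_algebroid s t eps Delta S -> HH_eq s t (Delta 0) [::].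
Proof.
move=> hA; have := ha_Delta_scale hA 0 0; rewrite scale0r => h.
apply: te_trans h _.
under eq_map do rewrite scale0r.
exact: tens_zerosl.
Qed.

Lemma F_resp (k : fieldType) (A H : comAlgType k) (s t : {lrmorphism A -> H})
  (eps : {lrmorphism H -> A}) (Delta : H -> seq (H * H)) (S : {lrmorphism H -> H}) l1 l2 :
  hopf_algebroid s t eps Delta S -> HH_eq s t l1 l2 ->
  HbarH_eq s t (Fm Delta S l1) (Fm Delta S l2).
Proof.
move=> hA; have hSt := ha_S_t hA; elim=> /=.
- move=> *; exact: te_refl.
- move=> *; exact: te_sym.
- move=> *; apply: te_trans; eauto.
- by move=> *; rewrite !Fm_cat; apply: te_cat.
- by move=> *; rewrite !Fm_cat; apply: te_comm.
- move=> m1 m2 n; rewrite /Fm /= !cats0 -map_cat.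
  exact: (G_resp _ hSt (ha_Delta_add hA m1 m2)).
- move=> m n1 n2; rewrite /Fm /= !cats0; exact: G_addn.
- move=> n; rewrite /Fm /= !cats0.
  exact: (G_resp _ hSt (Delta0 hA)).
- move=> m; rewrite /Fm /= !cats0; exact: G_0.
- move=> a m n; rewrite /Fm /= !cats0.
  apply: te_trans (G_resp _ hSt (_ : HH_eq s t _ [seq (p.1, p.2 * t a) | p <- Delta m])) _.
    by rewrite mulrC; exact: ha_Delta_tr hA a m.
  rewrite /Gm -map_comp; apply: tens_map1 => -[p1 p2] /=.
  apply: (te_trans (s2 := [:: (s a * p2, S p1 * n)])); first apply: te_congl.
    exists [:: (- p2, a)]; rewrite big_cons big_nil /=.
    by rewrite addr0 mulNr mulrBr opprB mulrC [p2 * s a]mulrC.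
  by rewrite mulrCA; apply: te_bal.
- by move=> m m' n ->; apply: te_refl.
- by move=> m n1 n2 ->; apply: te_refl.
Qed.

Lemma coact_add (k : fieldType) (A H : comAlgType k) (s t : {lrmorphism A -> H})
  (eps : {lrmorphism H -> A}) (Delta : H -> seq (H * H)) (S : {lrmorphism H -> H}) u v :
  hopf_algebroid s t eps Delta S ->
  HbarH_eq s t (coact Delta S (u + v)) (coact Delta S u ++ coact Delta S v).
Proof.
move=> hA; have := F_resp hA (ha_Delta_add hA u v); rewrite Fm_cat; exact.
Qed.

Lemma st0 (k : fieldType) (A H : comAlgType k) (s t : {lrmorphism A -> H}) :
  st_ideal s t 0.
Proof. by exists [::]; rewrite big_nil. Qed.

Lemma lift_QH (k : fieldType) (A H : comAlgType k) (s t : {lrmorphism A -> H})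
  (I : H -> Prop) l1 l2 : is_ideal I ->
  HbarH_eq s t l1 l2 -> QH_eq s t I l1 l2.
Proof.
move=> [I0 _ _]; apply: tens_mono => m m' h; exists 0; split => //.
by rewrite /barH_eq subr0.
Qed.

Lemma QH_I0 (k : fieldType) (A H : comAlgType k) (s t : {lrmorphism A -> H})
  (I : H -> Prop) r : (forall p, p \in r -> I p.1) -> QH_eq s t I r [::].
Proof.
elim: r => [|[a b] r IH] hr /=; first exact: te_refl.
rewrite -cat1s -[@nil (H * H)]/([::] ++ [::]).
apply: te_cat; last by apply: IH => p hp; apply: hr; rewrite in_cons hp orbT.
apply: (te_trans (s2 := [:: (0, b)])); last exact: te_zerol.
apply: te_congl; exists a; split; first by apply: (hr (a, b)); rewrite mem_head.
by rewrite /barH_eq subr0 subrr; apply: st0.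
Qed.

Lemma QH_to_HbarH (k : fieldType) (A H : comAlgType k) (s t : {lrmorphism A -> H})
  (I : H -> Prop) l1 l2 : is_ideal I ->
  QH_eq s t I l1 l2 ->
  exists r, (forall p, p \in r -> I p.1) /\ HbarH_eq s t l1 (l2 ++ r).
Proof.
move=> [I0 ID IM].
have triv : forall l1 l2, HbarH_eq s t l1 l2 ->
    exists r, (forall p, p \in r -> I p.1) /\ HbarH_eq s t l1 (l2 ++ r).
  by move=> l l' h; exists [::]; rewrite cats0.
elim.
- move=> l; apply: triv; exact: te_refl.
- move=> l l' _ [r [hr h]].
  exists [seq (- p.1, p.2) | p <- r]; split.
    move=> p /mapP [q qr ->] /=; rewrite -mulN1r; apply: IM; exact: hr.
  apply: te_sym; apply: te_trans (te_cat h (te_refl _ _ _ _ _)) _.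
  rewrite -catA -[l in tens_eq _ _ _ _ _ l]cats0; apply: te_cat; first exact: te_refl.
  exact: tens_neg.
- move=> l l' l'' _ [r [hr h]] _ [r' [hr' h']].
  exists (r' ++ r); split.
    by move=> p; rewrite mem_cat => /orP [] ?; [apply: hr'|apply: hr].
  apply: te_trans h _; rewrite catA; apply: te_cat => //; exact: te_refl.
- move=> a1 a2 b1 b2 _ [r [hr h]] _ [r' [hr' h']].
  exists (r ++ r'); split.
    by move=> p; rewrite mem_cat => /orP [] ?; [apply: hr|apply: hr'].
  apply: te_trans (te_cat h h') _; apply: tens_perm.
  by rewrite perm_catACA.
- move=> *; apply: triv; exact: te_comm.
- move=> *; apply: triv; exact: te_addl.
- move=> *; apply: triv; exact: te_addr.
- move=> *; apply: triv; exact: te_zerol.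
- move=> *; apply: triv; exact: te_zeror.
- move=> *; apply: triv; exact: te_bal.
- move=> m m' n [i [Ii hi]].
  exists [:: (i, n)]; split; first by move=> p; rewrite mem_seq1 => /eqP ->.
  apply: (te_trans (s2 := [:: (m' + i, n)])); last exact: te_addl.
  apply: te_congl; move: hi; rewrite /barH_eq.
  by rewrite opprD addrA.
- by move=> m n n' ->; apply: triv; exact: te_refl.
Qed.

Theorem proposition3p18 (k : fieldType) (A H : comAlgType k)
    (s t : {lrmorphism A -> H}) (eps : {lrmorphism H -> A})
    (Delta : H -> seq (H * H)) (S : {lrmorphism H -> H}) (I : H -> Prop) :
  hopf_algebroid s t eps Delta S ->
  hopf_ideal s t eps Delta S I ->
  (normal_ideal s t Delta S I <->
   ((forall x, st_ideal s t x -> I x) /\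
    exists dt : H -> seq (H * H),
      (forall x y, quotI_eq s t I x y -> QH_eq s t I (dt x) (dt y)) /\
      (forall h, QH_eq s t I (dt h) (coact Delta S h)))).
Proof.
move=> hA [hI _ _ _]; have [I0 ID IM] := hI; split.
- move=> [stI hN]; split => //; exists (coact Delta S); split; last first.
    by move=> h; exact: te_refl.
  move=> x y [i [Ii hi]].
  have Ixy : I (x - y).
    have -> : x - y = (x - y - i) + i by rewrite subrK.
    by apply: ID => //; apply: stI.
  have [r [hr h]] := hN _ Ixy.
  have e : x = y + (x - y) by rewrite addrC subrK.
  apply: te_trans (lift_QH hI (_ : HbarH_eq s t (coact Delta S x) (coact Delta S y ++ r))) _.
    rewrite {1}e; apply: te_trans (coact_add _ _ hA) _.
    by apply: te_cat => //; exact: te_refl.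
  have := te_cat (te_refl _ _ _ _ (coact Delta S y)) (QH_I0 s t hr).
  by rewrite cats0.
- move=> [stI [dt [hdt hc]]]; split => // x Ix.
  have h0 : quotI_eq s t I x 0.
    by exists x; split => //; rewrite /barH_eq subr0 subrr; apply: st0.
  have hc0 : HbarH_eq s t (coact Delta S 0) [::].
    exact: (F_resp hA (Delta0 hA)).
  have : QH_eq s t I (coact Delta S x) [::].
    apply: te_trans (te_sym (hc x)) _.
    apply: te_trans (hdt _ _ h0) _.
    apply: te_trans (hc 0) _.
    exact: lift_QH hI hc0.
  case/(QH_to_HbarH hI) => r [hr h]; exists r; split => //.
Qed.
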